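(* Let $\widehat{G}$ be a signed complete bigraph. Then $\widehat{G}$ is chordal if and only if it does not contain any signed graph in $F_1\cup F_2\cup F_3\cup F_4$ as an induced subgraph, where: $F_1$ consists of the single signed graph $K_{2,2}$ (a 4-cycle) with all four edges negative; $F_2$: the complete bigraph with parts $\{a_1,a_2\}$, $\{b_1,b_2,b_3\}$, with $a_1b_1,a_1b_2,a_2b_2,a_2b_3$ negative and $a_1b_3,a_2b_1$ free; $F_3$: the complete bigraph with parts $\{a_1,a_2\}$, $\{b_1,b_2,b_3,b_4\}$, with $a_1b_1,a_1b_2,a_2b_3,a_2b_4$ negative and the other four edges free; $F_4$: the complete bigraph with parts $\{a_1,a_2,a_3\}$, $\{b_1,b_2,b_3\}$, with $a_1b_1,a_2b_2,a_3b_3$ negative and the other six edges free.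
   Context: A signed graph is a finite simple graph each of whose edges is assigned a sign, positive or negative. A signed bigraph is a signed graph whose underlying graph is bipartite, with bipartition $(X,Y)$; it is a signed complete bigraph if the underlying graph is complete bipartite. An induced subgraph is obtained by deleting vertices only (signs are inherited); $\widehat G$ contains $H$ as an induced subgraph if some induced subgraph of $\widehat G$ is isomorphic to $H$ via a sign-preserving isomorphism. A signed graph is positive if all its edges are positive. In a bigraph with bipartition $(X,Y)$, a subgraph $H$ is a biclique if every vertex of $V(H)\cap X$ is adjacent to every vertex of $V(H)\cap Y$. For an edge $uv$, $N(uv)=(N(u)\cup N(v))\setminus\{u,v\}$. An edge $uv$ of a signed bigraph is signed simplicial if $N(uv)$ induces a positive biclique. A signed bigraph $\widehat G$ is chordal if its edges can be ordered $e_1,\dots,e_m$ so that each $e_i$ is signed simplicial in the signed bigraph $\widehat G-\{e_1,\dots,e_{i-1}\}$ obtained by deleting these edges (but no vertices). A family described by a graph with some edges declared negative, some positive, and the rest declared free, is the set of all signed graphs obtained by giving each free edge an arbitrary sign. *)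

(* Defs.v *)
From mathcomp Require Import all_boot.
Set Implicit Arguments. Unset Strict Implicit. Unset Printing Implicit Defensive.

(* A signed bigraph on a finite vertex type T: bipartition (X, ~:X),
   edge set E : {set T * T} of ordered pairs (x, y) with x \in X, y \notin X,
   and sign function neg : T -> T -> bool, where edge (x,y) is negative iff
   neg x y (only the values on X x Y matter). *)

Section Signed.
Variable T : finType.

Definition sadj (E : {set T * T}) (u v : T) : bool := ((u, v) \in E) || ((v, u) \in E).

Definition nbhd_edge (E : {set T * T}) (u v : T) : {set T} :=
  [set w | (sadj E u w || sadj E v w) && (w != u) && (w != v)].

Definition signed_simplicial (X : {set T}) (neg : T -> T -> bool)
    (E : {set T * T}) (e : T * T) : bool :=
  [forall x, forall y,
     [&& x \in nbhd_edge E e.1 e.2, y \in nbhd_edge E e.1 e.2, x \in X & y \notin X]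
     ==> ((x, y) \in E) && ~~ neg x y].

Fixpoint simplicial_ordering (X : {set T}) (neg : T -> T -> bool)
    (E : {set T * T}) (s : seq (T * T)) : bool :=
  match s with
  | [::] => E == set0
  | e :: s' => [&& e \in E, signed_simplicial X neg E e
                & simplicial_ordering X neg (E :\ e) s']
  end.

Definition chordal (X : {set T}) (neg : T -> T -> bool) (E : {set T * T}) : Prop :=
  exists s, simplicial_ordering X neg E s.

Definition complete_edges (X : {set T}) : {set T * T} :=
  [set p : T * T | (p.1 \in X) && (p.2 \notin X)].

Definition cneg (X : {set T}) (neg : T -> T -> bool) (u v : T) : bool :=
  if u \in X then neg u v else neg v u.

End Signed.

(* Patterns: complete bigraph with parts 'I_p (the a_i) and 'I_q (the b_j),
   signed by sg : 'I_p -> 'I_q -> bool (true = negative). *)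
Definition pat_adj (p q : nat) (u v : 'I_p + 'I_q) : bool :=
  match u, v with
  | inl _, inr _ => true
  | inr _, inl _ => true
  | _, _ => false
  end.

Definition pat_neg (p q : nat) (sg : 'I_p -> 'I_q -> bool) (u v : 'I_p + 'I_q) : bool :=
  match u, v with
  | inl i, inr j => sg i j
  | inr j, inl i => sg i j
  | _, _ => false
  end.

Definition contains_pat (T : finType) (X : {set T}) (neg : T -> T -> bool)
    (p q : nat) (sg : 'I_p -> 'I_q -> bool) : Prop :=
  exists f : 'I_p + 'I_q -> T, injective f /\
    forall u v, pat_adj u v = sadj (complete_edges X) (f u) (f v) /\
                (pat_adj u v -> pat_neg sg u v = cneg X neg (f u) (f v)).

(* family given by prescribed negative edges (negs); all other edges free *)
Definition contains_family (T : finType) (X : {set T}) (neg : T -> T -> bool)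
    (p q : nat) (negs : 'I_p -> 'I_q -> bool) : Prop :=
  exists sg : 'I_p -> 'I_q -> bool,
    (forall i j, negs i j -> sg i j) /\ contains_pat X neg sg.

(* indices: a_(i+1) <-> i, b_(j+1) <-> j *)
Definition F1neg (i : 'I_2) (j : 'I_2) : bool := true.
Definition F2neg (i : 'I_2) (j : 'I_3) : bool :=
  ((i == 0 :> nat) && (j <= 1)) || ((i == 1 :> nat) && (1 <= j)).
Definition F3neg (i : 'I_2) (j : 'I_4) : bool :=
  ((i == 0 :> nat) && (j <= 1)) || ((i == 1 :> nat) && (2 <= j)).
Definition F4neg (i : 'I_3) (j : 'I_3) : bool := (i == j :> nat).

(* Main.v *)
Require Import Defs.
From mathcomp Require Import all_boot.
Set Implicit Arguments. Unset Strict Implicit. Unset Printing Implicit Defensive.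

Lemma sadj_complete (T : finType) (X : {set T}) a b :
  sadj (complete_edges X) a b = ((a \in X) != (b \in X)).
Proof. by rewrite /sadj !inE /=; case: (a \in X); case: (b \in X). Qed.

Lemma not_ss (T : finType) (X : {set T}) (neg : T -> T -> bool) (E : {set T * T}) u v x y :
  u \in X -> v \notin X -> x \in X -> y \notin X -> neg x y -> x != u -> y != v ->
  (x, v) \in E -> (u, y) \in E -> ~~ signed_simplicial X neg E (u, v).
Proof.
move=> Xu Yv Xx Yy nxy xu yv xvE uyE.
apply/negP => /forallP /(_ x) /forallP /(_ y) /implyP H.
have xv : x != v by apply: contraNneq Yv => <-.
have yu : y != u by apply: contraNneq Yy => ->.
have := H; rewrite !inE /= /sadj xvE uyE xu xv yu yv Xx Yy !orbT /=.
by move=> /(_ isT) /andP [_]; rewrite nxy.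
Qed.

Lemma pat_not_chordal (T : finType) (X : {set T}) (neg : T -> T -> bool) p q
  (negs : 'I_p -> 'I_q -> bool) (i0 : 'I_p) (j0 : 'I_q) :
  (forall i j, exists k l, [/\ k != i, l != j & negs k l]) ->
  contains_family X neg negs -> ~ chordal X neg (complete_edges X).
Proof.
move=> Hn [sg [Hsg [f [finj Hf]]]] [s].
have side u v : pat_adj u v -> (f u \in X) != (f v \in X).
  by case: (Hf u v) => -> _; rewrite sadj_complete.
have sgn k l : sg k l -> cneg X neg (f (inl k)) (f (inr l)).
  by case: (Hf (inl k) (inr l)) => _ /(_ isT) /= <-.
suff H : forall E : {set T * T}, (forall u v, f u \in X -> f v \notin X -> (f u, f v) \in E) ->
   ~~ simplicial_ordering X neg E s.
  by apply/negP/H => u v Xu Yv; rewrite inE /= Xu.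
elim: s => [|e s IH] E HE /=.
  have := side (inl i0) (inr j0) isT.
  case Xa: (f (inl i0) \in X); case Xb: (f (inr j0) \in X) => //= _.
  - apply/negP => /eqP E0; move: (HE _ _ Xa (negbT Xb)); by rewrite E0 inE.
  - apply/negP => /eqP E0; move: (HE _ _ Xb (negbT Xa)); by rewrite E0 inE.
case: (boolP [exists u, exists v, [&& e == (f u, f v), f u \in X & f v \notin X]]).
- case/existsP => u /existsP [v /and3P [/eqP -> Xu Yv]].
  suff /negbTE -> : ~~ signed_simplicial X neg E (f u, f v) by rewrite andbF.
  have puv : pat_adj u v by case: (Hf u v) => -> _; rewrite sadj_complete Xu (negbTE Yv).
  move: puv Xu Yv; case: u => [i|j]; case: v => [i'|j'] //= _ Xu Yv.
  + have [k [l [ki lj nkl]]] := Hn i j'.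
    have Xx : f (inl k) \in X.
      by move: (side (inl k) (inr j') isT); rewrite (negbTE Yv); case: (_ \in X).
    have Yy : f (inr l) \notin X.
      by move: (side (inl i) (inr l) isT); rewrite Xu; case: (_ \in X).
    apply: (not_ss (x := f (inl k)) (y := f (inr l))) => //.
    * by move: (sgn k l (Hsg k l nkl)); rewrite /cneg Xx.
    * by rewrite (inj_eq finj).
    * by rewrite (inj_eq finj).
    * exact: HE.
    * exact: HE.
  + have [k [l [ki lj nkl]]] := Hn i' j.
    have Xx : f (inr l) \in X.
      by move: (side (inr l) (inl i') isT); rewrite (negbTE Yv); case: (_ \in X).
    have Yy : f (inl k) \notin X.
      by move: (side (inl k) (inr j) isT); rewrite Xu; case: (_ \in X).
    apply: (not_ss (x := f (inr l)) (y := f (inl k))) => //.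
    * by move: (sgn k l (Hsg k l nkl)); rewrite /cneg (negbTE Yy).
    * by rewrite (inj_eq finj).
    * by rewrite (inj_eq finj).
    * exact: HE.
    * exact: HE.
- move=> Hno; apply/negP => /and3P [_ _]; apply/negP; apply: IH => u v Xu Yv.
  rewrite !inE HE // andbT.
  apply: contra Hno => /eqP <-; apply/existsP; exists u; apply/existsP; exists v.
  by rewrite eqxx Xu Yv.
Qed.

Definition rk (T : finType) (t0 a : T) : nat := if a == t0 then 0 else (enum_rank a).+1.
Definition key (T : finType) (x0 y0 : T) (z : T * T) : nat :=
  rk x0 z.1 * #|T|.+1 + rk y0 z.2.
Arguments key : simpl never.
Definition Ec (T : finType) (X : {set T}) (x0 y0 : T) (c : nat) : {set T * T} :=
  [set z in complete_edges X | c <= key x0 y0 z].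

Lemma rk_lt (T : finType) (t0 a : T) : rk t0 a < #|T|.+1.
Proof. by rewrite /rk; case: (a == t0) => //; rewrite ltnS ltn_ord. Qed.

Lemma rk_inj (T : finType) (t0 : T) : injective (rk t0).
Proof.
move=> a b; rewrite /rk; case: eqP => [->|_]; case: eqP => [->|_] //.
by case=> /val_inj /enum_rank_inj.
Qed.

Lemma keyE (T : finType) (x0 y0 a b : T) : key x0 y0 (a, b) = rk x0 a * #|T|.+1 + rk y0 b.
Proof. by []. Qed.

Lemma key_inj (T : finType) (x0 y0 : T) : injective (key x0 y0).
Proof.
have K1 z : key x0 y0 z %/ #|T|.+1 = rk x0 z.1.
  by rewrite /key divnMDl // divn_small ?addn0 // rk_lt.
have K2 z : key x0 y0 z %% #|T|.+1 = rk y0 z.2.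
  by rewrite /key modnMDl modn_small // rk_lt.
move=> [a b] [a' b'] e; have := K1 (a, b); have := K2 (a, b).
by rewrite e K1 K2 /= => /rk_inj -> /rk_inj ->.
Qed.

Lemma key_lt (T : finType) (x0 y0 : T) z : key x0 y0 z < #|T|.+1 * #|T|.+1.
Proof.
rewrite /key; apply: (@leq_trans ((rk x0 z.1).+1 * #|T|.+1)).
  by rewrite mulSn [_ + rk x0 _ * _]addnC ltn_add2l rk_lt.
by rewrite leq_pmul2r ?rk_lt.
Qed.

Lemma Ec_ss (T : finType) (X : {set T}) (neg : T -> T -> bool) (x0 y0 : T) c x y :
  (forall a b, a \in X -> b \notin X -> neg a b -> (a == x0) || (b == y0)) ->
  x \in X -> y \notin X -> key x0 y0 (x, y) = c ->
  signed_simplicial X neg (Ec X x0 y0 c) (x, y).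
Proof.
move=> Hc Xx Yy kc; apply/forallP => a; apply/forallP => b; apply/implyP.
case/and4P => Na Nb Xa Yb.
move: Na Nb; rewrite !inE /= /sadj !inE /= Xx (negbTE Yy) Xa (negbTE Yb) /= ?andbF ?orbF /=.
rewrite -kc !keyE => /andP [/andP [la ax] _] /andP [/andP [lb _] yb].
move: la; rewrite leq_add2r leq_pmul2r // => la.
move: lb; rewrite leq_add2l => lb.
have la' : rk x0 x < rk x0 a by rewrite ltn_neqAle la andbT (inj_eq (@rk_inj _ x0)) eq_sym.
have lb' : rk y0 y < rk y0 b by rewrite ltn_neqAle lb andbT (inj_eq (@rk_inj _ y0)) eq_sym.
rewrite leq_add ?leq_mul //=.
apply/negP => nab; case/orP: (Hc a b Xa Yb nab) => /eqP e.
  by move: la'; rewrite /rk e eqxx.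
by move: lb'; rewrite /rk e eqxx.
Qed.

Lemma cover_chordal (T : finType) (X : {set T}) (neg : T -> T -> bool) (x0 y0 : T) :
  (forall a b, a \in X -> b \notin X -> neg a b -> (a == x0) || (b == y0)) ->
  chordal X neg (complete_edges X).
Proof.
move=> Hc.
have step c : chordal X neg (Ec X x0 y0 c.+1) -> chordal X neg (Ec X x0 y0 c).
  case=> s hs.
  case: (boolP [exists z, [&& z.1 \in X, z.2 \notin X & key x0 y0 z == c]]).
  - case/existsP => -[x y] /and3P [/= Xx Yy /eqP kc].
    exists ((x, y) :: s) => /=.
    have -> : Ec X x0 y0 c :\ (x, y) = Ec X x0 y0 c.+1.
      apply/setP => -[a b]; rewrite !inE /= -(inj_eq (@key_inj _ x0 y0)) kc.
      rewrite [c < _]ltn_neqAle [c == _]eq_sym.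
      by case: (_ == c); case: (a \in X); case: (b \in X).
    rewrite hs andbT !inE /= Xx Yy kc leqnn /=.
    exact: Ec_ss.
  - move=> Hno; exists s; suff -> : Ec X x0 y0 c = Ec X x0 y0 c.+1 by [].
    apply/setP => z; rewrite !inE.
    case Hz: ((z.1 \in X) && (z.2 \notin X)) => //=.
    rewrite leq_eqVlt; case: eqP => //= e; case/negP: Hno.
    by apply/existsP; exists z; case/andP: Hz => -> ->; rewrite e eqxx.
have main k : forall c, #|T|.+1 * #|T|.+1 <= c + k -> chordal X neg (Ec X x0 y0 c).
  elim: k => [|k IH] c hc.
    exists [::] => /=; apply/eqP/setP => z; rewrite !inE.
    rewrite leqNgt (leq_trans (key_lt x0 y0 z)) ?andbF //; by rewrite addn0 in hc.
  by apply: step; apply: IH; rewrite addSnnS.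
suff -> : complete_edges X = Ec X x0 y0 0 by apply: (main _ 0); rewrite add0n.
by apply/setP => z; rewrite /Ec in_set leq0n andbT.
Qed.

Lemma mk_family (T : finType) (X : {set T}) (neg : T -> T -> bool) p q
  (negs : 'I_p -> 'I_q -> bool) (fa : 'I_p -> T) (fb : 'I_q -> T) (b : bool) :
  injective fa -> injective fb -> (forall i, (fa i \in X) = b) ->
  (forall j, (fb j \in X) = ~~ b) ->
  (forall i j, negs i j -> cneg X neg (fa i) (fb j)) -> contains_family X neg negs.
Proof.
move=> ia ib Ha Hb Hn.
exists (fun i j => cneg X neg (fa i) (fb j)); split => //.
exists (fun u => match u with inl i => fa i | inr j => fb j end); split.
- move=> [i|j] [i'|j'] /= e.
  + by rewrite (ia _ _ e).
  + by move: (Ha i) (Hb j'); rewrite e => ->; case: b Ha Hb.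
  + by move: (Ha i') (Hb j); rewrite e => ->; case: b Ha Hb.
  + by rewrite (ib _ _ e).
- move=> [i|j] [i'|j'] /=; rewrite /sadj /cneg !inE /= ?Ha ?Hb; case: b Ha Hb => _ _; split => //.
Qed.

Lemma inj_nth (T : eqType) (d : T) p (s : seq T) : uniq s -> size s = p ->
  injective (fun i : 'I_p => nth d s i).
Proof.
move=> us ss i j /eqP; rewrite nth_uniq ?ss ?ltn_ord // => /eqP; apply: val_inj.
Qed.

Lemma fam_pos (T : finType) (X : {set T}) (neg : T -> T -> bool) p q
  (negs : 'I_p -> 'I_q -> bool) (d : T) (sa sb : seq T) :
  uniq sa -> size sa = p -> uniq sb -> size sb = q ->
  all (fun v => v \in X) sa -> all (fun v => v \notin X) sb ->
  (forall (i : 'I_p) (j : 'I_q), negs i j -> neg (nth d sa i) (nth d sb j)) ->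
  contains_family X neg negs.
Proof.
move=> ua za ub zb Aa Ab Hn.
apply: (@mk_family _ _ _ _ _ _ (fun i => nth d sa i) (fun j => nth d sb j) true).
- exact: inj_nth.
- exact: inj_nth.
- by move=> i; apply: (allP Aa); rewrite mem_nth // za.
- by move=> j; apply/negbTE; apply: (allP Ab); rewrite mem_nth // zb.
- move=> i j nij; have Xa : nth d sa i \in X by apply: (allP Aa); rewrite mem_nth // za.
  by rewrite /cneg Xa; apply: Hn.
Qed.

Lemma fam_neg (T : finType) (X : {set T}) (neg : T -> T -> bool) p q
  (negs : 'I_p -> 'I_q -> bool) (d : T) (sa sb : seq T) :
  uniq sa -> size sa = p -> uniq sb -> size sb = q ->
  all (fun v => v \notin X) sa -> all (fun v => v \in X) sb ->
  (forall (i : 'I_p) (j : 'I_q), negs i j -> neg (nth d sb j) (nth d sa i)) ->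
  contains_family X neg negs.
Proof.
move=> ua za ub zb Aa Ab Hn.
apply: (@mk_family _ _ _ _ _ _ (fun i => nth d sa i) (fun j => nth d sb j) false).
- exact: inj_nth.
- exact: inj_nth.
- by move=> i; apply/negbTE; apply: (allP Aa); rewrite mem_nth // za.
- by move=> j; apply: (allP Ab); rewrite mem_nth // zb.
- move=> i j nij; have Xa : nth d sa i \notin X by apply: (allP Aa); rewrite mem_nth // za.
  by rewrite /cneg (negbTE Xa); apply: Hn.
Qed.

Ltac uniqt := rewrite /= ?inE ?negb_or /=;
  repeat (apply/andP; split); try done; rewrite eq_sym; done.
Ltac negst := case=> [[|[|[|[|i]]]]] // Hi; case=> [[|[|[|[|j]]]]] // Hj;
  rewrite /F1neg /F2neg /F3neg /F4neg /=; try done; move=> _; assumption.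

Lemma find_pattern (T : finType) (X : {set T}) (neg : T -> T -> bool) (t : T) :
  (forall x0 y0 : T, exists a b, [/\ a \in X, b \notin X, neg a b, a != x0 & b != y0]) ->
  [\/ contains_family X neg F1neg, contains_family X neg F2neg,
      contains_family X neg F3neg | contains_family X neg F4neg].
Proof.
move=> H.
have [a1 [b1 [Xa1 Yb1 n11 _ _]]] := H t t.
have [a2 [b2 [Xa2 Yb2 n22 a21 b21]]] := H a1 b1.
have [a3 [b3 [Xa3 Yb3 n33 a31 b32]]] := H a1 b2.
have [a4 [b4 [Xa4 Yb4 n44 a42 b41]]] := H a2 b1.
Ltac allt := rewrite /= ?andbT; repeat (apply/andP; split); assumption.
Ltac pos d sa sb := apply: (@fam_pos _ _ _ _ _ _ d sa sb); [uniqt|by []|uniqt|by []|allt|allt|negst].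
Ltac ngt d sa sb := apply: (@fam_neg _ _ _ _ _ _ d sa sb); [uniqt|by []|uniqt|by []|allt|allt|negst].
have F4b : a4 != a1 -> b4 != b2 -> contains_family X neg F4neg.
  move=> a41 b42; pos a1 [:: a1; a2; a4] [:: b1; b2; b4].
case: (eqVneq a3 a2) => [e|a32]; [subst a3; case: (eqVneq b3 b1) => [e|b31]; [subst b3|] |
   case: (eqVneq b3 b1) => [e|b31]; [subst b3|]].
-
  case: (eqVneq a4 a1) => [e|a41]; [subst a4; case: (eqVneq b4 b2) => [e|b42]; [subst b4|] |
     case: (eqVneq b4 b2) => [e|b42]; [subst b4|]].
  + apply: Or41; pos a1 [:: a1; a2] [:: b1; b2].
  + apply: Or42; pos a1 [:: a1; a2] [:: b4; b1; b2].
  + apply: Or42; ngt a1 [:: b2; b1] [:: a4; a2; a1].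
  + by apply: Or44; apply: F4b.
-
  case: (eqVneq a4 a1) => [e|a41]; [subst a4; case: (eqVneq b4 b2) => [e|b42]; [subst b4|] |
     case: (eqVneq b4 b2) => [e|b42]; [subst b4|]].
  + apply: Or42; pos a1 [:: a2; a1] [:: b3; b2; b1].
  + case: (eqVneq b4 b3) => [e|b43]; [subst b4|].
    * apply: Or42; pos a1 [:: a1; a2] [:: b1; b3; b2].
    * apply: Or43; pos a1 [:: a1; a2] [:: b1; b4; b2; b3].
  + apply: Or44; pos a1 [:: a1; a2; a4] [:: b1; b3; b2].
  + by apply: Or44; apply: F4b.
-
  case: (eqVneq a4 a1) => [e|a41]; [subst a4; case: (eqVneq b4 b2) => [e|b42]; [subst b4|] |
     case: (eqVneq b4 b2) => [e|b42]; [subst b4|]].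
  + apply: Or42; ngt a1 [:: b1; b2] [:: a3; a1; a2].
  + apply: Or44; pos a1 [:: a3; a1; a2] [:: b1; b4; b2].
  + case: (eqVneq a4 a3) => [e|a43]; [subst a4|].
    * apply: Or42; ngt a1 [:: b1; b2] [:: a1; a3; a2].
    * apply: Or43; ngt a1 [:: b1; b2] [:: a1; a3; a2; a4].
  + by apply: Or44; apply: F4b.
-
  apply: Or44; pos a1 [:: a1; a2; a3] [:: b1; b2; b3].
Qed.

Definition oo {n} m (h : m < n) : 'I_n := Ordinal h.
Ltac hnt p q := case=> [[|[|[|[|i]]]]] // Hi; case=> [[|[|[|[|j]]]]] // Hj;
  first [ exists (@oo p 0 isT), (@oo q 0 isT); by rewrite /F1neg /F2neg /F3neg /F4neg
        | exists (@oo p 0 isT), (@oo q 1 isT); by rewrite /F1neg /F2neg /F3neg /F4neg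
        | exists (@oo p 0 isT), (@oo q 2 isT); by rewrite /F1neg /F2neg /F3neg /F4neg
        | exists (@oo p 0 isT), (@oo q 3 isT); by rewrite /F1neg /F2neg /F3neg /F4neg
        | exists (@oo p 1 isT), (@oo q 0 isT); by rewrite /F1neg /F2neg /F3neg /F4neg
        | exists (@oo p 1 isT), (@oo q 1 isT); by rewrite /F1neg /F2neg /F3neg /F4neg
        | exists (@oo p 1 isT), (@oo q 2 isT); by rewrite /F1neg /F2neg /F3neg /F4neg
        | exists (@oo p 1 isT), (@oo q 3 isT); by rewrite /F1neg /F2neg /F3neg /F4neg
        | exists (@oo p 2 isT), (@oo q 0 isT); by rewrite /F1neg /F2neg /F3neg /F4neg
        | exists (@oo p 2 isT), (@oo q 1 isT); by rewrite /F1neg /F2neg /F3neg /F4neg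
        | exists (@oo p 2 isT), (@oo q 2 isT); by rewrite /F1neg /F2neg /F3neg /F4neg
        | exists (@oo p 2 isT), (@oo q 3 isT); by rewrite /F1neg /F2neg /F3neg /F4neg ].

Lemma hn1 : forall i j, exists k l, [/\ k != i, l != j & F1neg k l]. Proof. hnt 2 2. Qed.
Lemma hn2 : forall i j, exists k l, [/\ k != i, l != j & F2neg k l]. Proof. hnt 2 3. Qed.
Lemma hn3 : forall i j, exists k l, [/\ k != i, l != j & F3neg k l]. Proof. hnt 2 4. Qed.
Lemma hn4 : forall i j, exists k l, [/\ k != i, l != j & F4neg k l]. Proof. hnt 3 3. Qed.

Theorem theorem2p2 (T : finType) (X : {set T}) (neg : T -> T -> bool) :
  chordal X neg (complete_edges X) <->
  ~ [\/ contains_family X neg F1neg, contains_family X neg F2neg,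
        contains_family X neg F3neg | contains_family X neg F4neg].
Proof.
split.
- move=> Hch [H|H|H|H].
  + exact: (pat_not_chordal ord0 ord0 hn1 H Hch).
  + exact: (pat_not_chordal ord0 ord0 hn2 H Hch).
  + exact: (pat_not_chordal ord0 ord0 hn3 H Hch).
  + exact: (pat_not_chordal ord0 ord0 hn4 H Hch).
- move=> Hno.
  case: (pickP (@predT T)) => [t _|T0]; last first.
    by exists [::]; apply/eqP/setP => -[a b]; have := T0 a.
  case: (boolP [exists x0, exists y0, [forall a, forall b,
      [&& a \in X, b \notin X & neg a b] ==> (a == x0) || (b == y0)]]).
  + case/existsP => x0 /existsP [y0 /forallP Hc].
    apply: (@cover_chordal _ _ _ x0 y0) => a b Xa Yb nab.
    by have := forallP (Hc a) b; rewrite Xa Yb nab.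
  + move=> Hn; exfalso; apply: Hno; apply: (find_pattern t) => x0 y0.
    move: Hn; rewrite negb_exists => /forallP /(_ x0); rewrite negb_exists => /forallP /(_ y0).
    rewrite negb_forall => /existsP [a]; rewrite negb_forall => /existsP [b].
    rewrite negb_imply negb_or => /andP [/and3P [Xa Yb nab] /andP [ax byy]].
    by exists a, b.
Qed.
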